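(* Let $n\ge 2$ and let $f$ be the $n$-ary operation on $\mathbb{Z}_8$ given by $f=2x_1\cdots x_n\left(\sum_{i=1}^n a_ix_i^2+\sum_{i=1}^n b_ix_i+c\right)$ with $a_i,b_i\in\{0,1\}$ and $c\in\{0,1,2,3\}$. Then $\sum_{i=1}^na_i+\sum_{i=1}^nb_i+c$ is even if and only if $f$ preserves the relation $$M=\{\mathbf{u}\in Z\mid a_{\{1,3\}}\equiv 0\pmod 4\},$$ where $a_{\{1,3\}}$ is the coefficient of $\mathbf{g}^{\{1,3\}}$ in the unique expression $\mathbf{u}=\sum_{A\in P_4}a_A\mathbf{g}^A$.
   Context: $P_4$ is the power set of $\{1,2,3,4\}$. For $A\in P_4$, $\mathbf{g}^A\in\mathbb{Z}_8^{P_4}$ is the tuple with $B$-component $1$ if $A\subseteq B$ and $0$ otherwise. Every $\mathbf{u}\in\mathbb{Z}_8^{P_4}$ has a unique expression $\mathbf{u}=\sum_{A\in P_4}a_A\mathbf{g}^A$ with $a_A\in\mathbb{Z}_8$. $Z\subseteq \mathbb{Z}_8^{P_4}$ consists of all $\mathbf{u}$ whose coefficients satisfy: (Z1) $a_{\{2\}}\equiv 2a_{\{1\}}\pmod 4$ and $a_{\{4\}}\equiv 2a_{\{3\}}\pmod 4$; (Z2) $a_A\equiv 0\pmod 2$ whenever $|A|\ge 2$; (Z3) $a_A\equiv 0\pmod 4$ whenever $|A|\ge 2$ and $A\cap\{2,4\}\neq\emptyset$; (Z4) $a_A=0$ whenever $\{2,4\}\subseteq A$. An operation preserves a relation if applying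 it componentwise to elements of the relation yields an element of the relation. *)

(* Defs.v *)
From mathcomp Require Import all_boot all_order all_algebra.
Set Implicit Arguments. Unset Strict Implicit. Unset Printing Implicit Defensive.
Import GRing.Theory.
Local Open Scope ring_scope.

(* Elements 1,2,3,4 of {1,2,3,4} are represented by 0,1,2,3 : 'I_4. *)
Definition e1 : 'I_4 := @Ordinal 4 0 isT.
Definition e2 : 'I_4 := @Ordinal 4 1 isT.
Definition e3 : 'I_4 := @Ordinal 4 2 isT.
Definition e4 : 'I_4 := @Ordinal 4 3 isT.

Definition tup := {ffun {set 'I_4} -> 'Z_8}.

Definition gvec (A : {set 'I_4}) : tup := [ffun B : {set 'I_4} => ((A \subset B) : nat)%:R].

Definition expand (a : {ffun {set 'I_4} -> 'Z_8}) : tup :=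
  [ffun B : {set 'I_4} => \sum_(A : {set 'I_4}) a A * gvec A B].

(* congruence modulo 4 of elements of Z_8 (well defined since 4 | 8) *)
Definition cong4 (x y : 'Z_8) : Prop := (val x %% 4 = val y %% 4)%N.

Definition Zcoeffs (a : {ffun {set 'I_4} -> 'Z_8}) : Prop :=
  cong4 (a [set e2]) (2 * a [set e1]) /\ cong4 (a [set e4]) (2 * a [set e3]) /\
  (forall A : {set 'I_4}, (2 <= #|A|)%N -> (2 %| val (a A))%N) /\
  (forall A : {set 'I_4}, (2 <= #|A|)%N -> A :&: [set e2; e4] != set0 ->
      cong4 (a A) 0) /\
  (forall A : {set 'I_4}, [set e2; e4] \subset A -> a A = 0).

Definition inZ (u : tup) : Prop :=
  exists a, u = expand a /\ Zcoeffs a.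

Definition inM (u : tup) : Prop :=
  exists a, u = expand a /\ Zcoeffs a /\ cong4 (a [set e1; e3]) 0.

Definition fop (n : nat) (a b : 'I_n -> bool) (c : nat) (x : 'I_n -> 'Z_8) : 'Z_8 :=
  2 * (\prod_(i < n) x i) *
  (\sum_(i < n) (a i : nat)%:R * x i ^+ 2 + \sum_(i < n) (b i : nat)%:R * x i + c%:R).

Definition preserves (n : nat) (f : ('I_n -> 'Z_8) -> 'Z_8) (R : tup -> Prop) : Prop :=
  forall u : 'I_n -> tup, (forall i, R (u i)) ->
    R [ffun B : {set 'I_4} => f (fun i => u i B)].

(* Main.v *)
Require Import Defs.
From mathcomp Require Import all_boot all_order all_algebra.
From mathcomp Require Import ring.
Set Implicit Arguments. Unset Strict Implicit. Unset Printing Implicit Defensive.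
Import GRing.Theory.
Local Open Scope ring_scope.

Definition quad := (bool * bool * bool * bool)%type.
Definition qbit (q : quad) (i : 'I_4) : bool :=
  nth false [:: q.1.1.1; q.1.1.2; q.1.2; q.2] i.
Definition mk (q : quad) : {set 'I_4} := [set i : 'I_4 | qbit q i].
Definition bits (A : {set 'I_4}) : quad := (e1 \in A, e2 \in A, e3 \in A, e4 \in A).

Lemma in_mk q i : (i \in mk q) = qbit q i.
Proof. by rewrite inE. Qed.

Lemma bitsK q : bits (mk q) = q.
Proof. by case: q => [[[? ?] ?] ?]; rewrite /bits !in_mk. Qed.

Lemma ord4P (P : 'I_4 -> Prop) : P e1 -> P e2 -> P e3 -> P e4 -> forall i, P i.
Proof.
move=> h1 h2 h3 h4 [[|[|[|[|k]]]] Hi].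
- by have -> : Ordinal Hi = e1 by apply: val_inj.
- by have -> : Ordinal Hi = e2 by apply: val_inj.
- by have -> : Ordinal Hi = e3 by apply: val_inj.
- by have -> : Ordinal Hi = e4 by apply: val_inj.
- by [].
Qed.

Lemma mkK A : mk (bits A) = A.
Proof. by apply/setP; apply: ord4P; rewrite in_mk. Qed.

Definition quads : seq quad :=
  [seq (x, y) | x <- [seq (x, y) | x <- [seq (x,y) | x <- [:: false; true], y <- [:: false; true]], y <- [:: false; true]], y <- [:: false; true]].

Lemma mem_quads q : q \in quads.
Proof. by case: q => [[[[] []] []] []]. Qed.

Lemma uniq_quads : uniq quads.
Proof. by []. Qed.

Lemma sumQ (F : {set 'I_4} -> 'Z_8) : \sum_(A : {set 'I_4}) F A = \sum_(q <- quads) F (mk q).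
Proof.
rewrite (reindex mk) /=; last by exists bits => x _; rewrite ?bitsK ?mkK.
apply: perm_big; apply: uniq_perm; first exact: index_enum_uniq.
  exact: uniq_quads.
by move=> q; rewrite mem_index_enum mem_quads.
Qed.

Lemma allQ (P : {set 'I_4} -> Prop) : (forall q, P (mk q)) -> forall A, P A.
Proof. by move=> H A; rewrite -(mkK A). Qed.

Definition qsub (p q : quad) : bool :=
  [&& p.1.1.1 ==> q.1.1.1, p.1.1.2 ==> q.1.1.2, p.1.2 ==> q.1.2 & p.2 ==> q.2].

Lemma subset_mk p q : (mk p \subset mk q) = qsub p q.
Proof.
apply/subsetP/and4P.
- move=> H; split; apply/implyP => h.
  + by have := H e1; rewrite !in_mk; apply.
  + by have := H e2; rewrite !in_mk; apply.
  + by have := H e3; rewrite !in_mk; apply.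
  + by have := H e4; rewrite !in_mk; apply.
- case=> /implyP h1 /implyP h2 /implyP h3 /implyP h4.
  by apply: ord4P; rewrite !in_mk.
Qed.

Lemma gvec_mk p q : gvec (mk p) (mk q) = (qsub p q : nat)%:R.
Proof. by rewrite ffunE subset_mk. Qed.

Definition cnt (q : quad) : nat := (q.1.1.1 + q.1.1.2 + q.1.2 + q.2)%N.

Lemma card_mk q : #|mk q| = cnt q.
Proof.
rewrite -sum1_card big_mkcond /= !big_ord_recr big_ord0 /= !in_mk /qbit /=.
by case: q => [[[[] []] []] []].
Qed.

Lemma set1E : [set e1] = mk (true,false,false,false).
Proof. by apply/setP; apply: ord4P; rewrite !inE. Qed.
Lemma set2E : [set e2] = mk (false,true,false,false).
Proof. by apply/setP; apply: ord4P; rewrite !inE. Qed.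
Lemma set3E : [set e3] = mk (false,false,true,false).
Proof. by apply/setP; apply: ord4P; rewrite !inE. Qed.
Lemma set4E : [set e4] = mk (false,false,false,true).
Proof. by apply/setP; apply: ord4P; rewrite !inE. Qed.
Lemma set13E : [set e1; e3] = mk (true,false,true,false).
Proof. by apply/setP; apply: ord4P; rewrite !inE. Qed.
Lemma set24E : [set e2; e4] = mk (false,true,false,true).
Proof. by apply/setP; apply: ord4P; rewrite !inE. Qed.

Lemma meet24 q : (mk q :&: [set e2; e4] != set0) = (q.1.1.2 || q.2).
Proof.
apply/set0Pn/idP.
- case=> x; rewrite !inE => /andP[hx /orP[/eqP ex|/eqP ex]]; move: hx; rewrite ex /qbit /=.
  + by move=> ->.
  + by move=> ->; rewrite orbT.
- case/orP=> h; [exists e2 | exists e4]; by rewrite !inE /qbit /= h ?eqxx ?orbT.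
Qed.

Lemma big_foldr (G : quad -> 'Z_8) s : \sum_(q <- s) G q = foldr (fun r acc => G r + acc) 0 s.
Proof. by elim: s => [|x s IH]; rewrite ?big_nil ?big_cons ?IH. Qed.


Lemma ord8P (P : 'Z_8 -> Prop) :
  P (@Ordinal 8 0 isT) -> P (@Ordinal 8 1 isT) -> P (@Ordinal 8 2 isT) -> P (@Ordinal 8 3 isT) ->
  P (@Ordinal 8 4 isT) -> P (@Ordinal 8 5 isT) -> P (@Ordinal 8 6 isT) -> P (@Ordinal 8 7 isT) ->
  forall x, P x.
Proof.
move=> h0 h1 h2 h3 h4 h5 h6 h7 [[|[|[|[|[|[|[|[|k]]]]]]]] Hi].
- by have -> : Ordinal Hi = @Ordinal 8 0 isT by apply: val_inj.
- by have -> : Ordinal Hi = @Ordinal 8 1 isT by apply: val_inj.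
- by have -> : Ordinal Hi = @Ordinal 8 2 isT by apply: val_inj.
- by have -> : Ordinal Hi = @Ordinal 8 3 isT by apply: val_inj.
- by have -> : Ordinal Hi = @Ordinal 8 4 isT by apply: val_inj.
- by have -> : Ordinal Hi = @Ordinal 8 5 isT by apply: val_inj.
- by have -> : Ordinal Hi = @Ordinal 8 6 isT by apply: val_inj.
- by have -> : Ordinal Hi = @Ordinal 8 7 isT by apply: val_inj.
- by [].
Qed.

Lemma F1b (x : 'Z_8) : (2 * x == 0) ==> (val x %% 4 == 0)%N.
Proof. by move: x; apply: ord8P; vm_compute. Qed.
Lemma F2b (x : 'Z_8) : (val x %% 4 == 0)%N ==> (2 * x == 0).
Proof. by move: x; apply: ord8P; vm_compute. Qed.
Lemma F3b (x y : 'Z_8) : (2 * x == 0) ==> (2 * y == 0) ==> (val x %% 4 == val (2 * y)%R %% 4)%N.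
Proof. by move: x y; apply: ord8P; apply: ord8P; vm_compute. Qed.
Lemma F4b (x : 'Z_8) : (2 * x == 0) ==> (2 %| val x)%N.
Proof. by move: x; apply: ord8P; vm_compute. Qed.
Lemma F5b (x y : 'Z_8) : (val x %% 4 == val (2 * y)%R %% 4)%N ==> (2 * x == 4 * y).
Proof. by move: x y; apply: ord8P; apply: ord8P; vm_compute. Qed.
Lemma F6b (x y : 'Z_8) : (4 * x == 0) ==> (4 * y == 0) ==> (2 * (x * y) == 0).
Proof. by move: x y; apply: ord8P; apply: ord8P; vm_compute. Qed.
Lemma F7b (x : 'Z_8) : 4 * (x * x) == 4 * x.
Proof. by move: x; apply: ord8P; vm_compute. Qed.
Lemma F8 : (8 : 'Z_8) = 0.
Proof. by apply/eqP; vm_compute. Qed.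


Lemma two0_cong (x : 'Z_8) : 2 * x = 0 -> cong4 x 0.
Proof. by move=> h; have := F1b x; rewrite h eqxx /= => /eqP. Qed.
Lemma cong_two0 (x : 'Z_8) : cong4 x 0 -> 2 * x = 0.
Proof. by rewrite /cong4 => h; have := F2b x; rewrite h /= => /eqP. Qed.
Lemma two0_cong2 (x y : 'Z_8) : 2 * x = 0 -> 2 * y = 0 -> cong4 x (2 * y).
Proof. by move=> h1 h2; have := F3b x y; rewrite h1 h2 eqxx /= => /eqP. Qed.
Lemma two0_dvd (x : 'Z_8) : 2 * x = 0 -> (2 %| val x)%N.
Proof. by move=> h1; have := F4b x; rewrite h1 eqxx. Qed.
Lemma cong2_four (x y : 'Z_8) : cong4 x (2 * y) -> 2 * x = 4 * y.
Proof. by rewrite /cong4 => h; have := F5b x y; rewrite h eqxx /= => /eqP. Qed.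
Lemma four_mul (x y : 'Z_8) : 4 * x = 0 -> 4 * y = 0 -> 2 * (x * y) = 0.
Proof. by move=> h1 h2; have := F6b x y; rewrite h1 h2 eqxx /= => /eqP. Qed.
Lemma four_sq (x : 'Z_8) : 4 * (x * x) = 4 * x.
Proof. exact/eqP/F7b. Qed.

Definition tw (x : 'Z_8) := 2 * x.

Lemma Zfact (a : {ffun {set 'I_4} -> 'Z_8}) : Zcoeffs a -> cong4 (a [set e1; e3]) 0 ->
  forall q, (2 <= cnt q)%N -> 2 * a (mk q) = 0.
Proof.
move=> [_ [_ [_ [Z3 _]]]] h13 q hq.
case h24: (q.1.1.2 || q.2).
  by apply: cong_two0; apply: Z3; rewrite ?card_mk ?meet24.
move: hq h24; case: q => [[[[] []] []] []] //= _ _.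
by rewrite -set13E; apply: cong_two0.
Qed.

Lemma GEN (a : {ffun {set 'I_4} -> 'Z_8}) : Zcoeffs a -> cong4 (a [set e1; e3]) 0 ->
  forall lam : {set 'I_4} -> 'Z_8,
  2 * lam (mk (false,false,false,false)) = 0 ->
  2 * (lam (mk (true,false,false,false)) + 2 * lam (mk (false,true,false,false))) = 0 ->
  2 * (lam (mk (false,false,true,false)) + 2 * lam (mk (false,false,false,true))) = 0 ->
  2 * \sum_A a A * lam A = 0.
Proof.
move=> hZ h13 lam H0 H1 H3.
have Zf q : 2 * a (mk q) = if (2 <= cnt q)%N then 0 else tw (a (mk q)).
  by case: ifP => h; [apply: Zfact | ].
have [Z1a [Z1b _]] := hZ.
have h2 : tw (a (mk (false,true,false,false))) = 4 * a (mk (true,false,false,false)).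
  by rewrite /tw -set2E -set1E; apply: cong2_four.
have h4 : tw (a (mk (false,false,false,true))) = 4 * a (mk (false,false,true,false)).
  by rewrite /tw -set4E -set3E; apply: cong2_four.
rewrite sumQ big_foldr /= !mulrDr !mulrA !Zf /= ?mul0r ?add0r ?addr0 h2 h4.
rewrite /tw.
transitivity (a (mk (false,false,false,false)) * (2 * lam (mk (false,false,false,false))) +
  a (mk (true,false,false,false)) * (2 * (lam (mk (true,false,false,false)) + 2 * lam (mk (false,true,false,false)))) +
  a (mk (false,false,true,false)) * (2 * (lam (mk (false,false,true,false)) + 2 * lam (mk (false,false,false,true))))).
  ring.
by rewrite H0 H1 H3 !mulr0 !addr0.
Qed.


Lemma lin (a : {ffun {set 'I_4} -> 'Z_8}) (cs : seq ('Z_8 * {set 'I_4})) :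
  \sum_(p <- cs) p.1 * expand a p.2 = \sum_A a A * \sum_(p <- cs) p.1 * gvec A p.2.
Proof.
under eq_bigr do rewrite ffunE mulr_sumr.
rewrite exchange_big /=; apply: eq_bigr => A _.
by rewrite mulr_sumr; apply: eq_bigr => p _; rewrite mulrCA.
Qed.

Definition q0 : quad := (false,false,false,false).
Definition q1 : quad := (true,false,false,false).
Definition q3 : quad := (false,false,true,false).

Lemma r1 (x1 x2 x3 x4 : 'Z_8) :
  2 * (x1 - x2 - 2 * (x3 - x4)) = 2 * (1 * x1 + (-1 * x2 + (-2 * x3 + (2 * x4 + 0)))).
Proof. ring. Qed.
Lemma r2 (x1 x2 x3 x4 x5 : 'Z_8) :
  2 * (x1 - x2 - 2 * (x3 - x5) - 2 * (x4 - x5)) =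
  2 * (1 * x1 + (-1 * x2 + (-2 * x3 + (-2 * x4 + (4 * x5 + 0))))).
Proof. ring. Qed.

Lemma E3 (u : tup) : inM u -> forall c1 c3 : bool,
  let e := u (mk q1) - u (mk q0) in let e' := u (mk q3) - u (mk q0) in
  2 * (u (mk (c1,true,c3,false)) - u (mk (c1,false,c3,false)) - 2 * e) = 0 /\
  2 * (u (mk (c1,false,c3,true)) - u (mk (c1,false,c3,false)) - 2 * e') = 0 /\
  2 * (u (mk (c1,true,c3,true)) - u (mk (c1,false,c3,false)) - 2 * e - 2 * e') = 0.
Proof.
case=> a [-> [hZ h13]] c1 c3 e e'; rewrite /e /e'.
split; [|split].
- transitivity (2 * \sum_(p <- [:: (1, mk (c1,true,c3,false)); (-1, mk (c1,false,c3,false));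
     (-2, mk q1); (2, mk q0)]) p.1 * expand a p.2).
    by rewrite !big_cons big_nil /=; first [apply: r1 | apply: r2].
  rewrite lin; apply: GEN => //; rewrite !big_cons !big_nil /= !gvec_mk;
  by case: c1; case: c3; apply/eqP; vm_compute.
- transitivity (2 * \sum_(p <- [:: (1, mk (c1,false,c3,true)); (-1, mk (c1,false,c3,false));
     (-2, mk q3); (2, mk q0)]) p.1 * expand a p.2).
    by rewrite !big_cons big_nil /=; first [apply: r1 | apply: r2].
  rewrite lin; apply: GEN => //; rewrite !big_cons !big_nil /= !gvec_mk;
  by case: c1; case: c3; apply/eqP; vm_compute.
- transitivity (2 * \sum_(p <- [:: (1, mk (c1,true,c3,true)); (-1, mk (c1,false,c3,false));
     (-2, mk q1); (-2, mk q3); (4, mk q0)]) p.1 * expand a p.2).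
    by rewrite !big_cons big_nil /=; first [apply: r1 | apply: r2].
  rewrite lin; apply: GEN => //; rewrite !big_cons !big_nil /= !gvec_mk;
  by case: c1; case: c3; apply/eqP; vm_compute.
Qed.


Definition mq (r p : quad) : 'Z_8 :=
  if qsub p r then (if odd (cnt r - cnt p) then -1 else 1) else 0.

Definition mob (w : tup) : {ffun {set 'I_4} -> 'Z_8} :=
  [ffun A => \sum_C w C * mq (bits A) (bits C)].

Lemma mk_eq p q : (mk p == mk q) = (p == q).
Proof. exact: (inj_eq (can_inj bitsK)). Qed.

Lemma KEYb : all (fun q => all (fun p =>
   foldr (fun r acc => mq r q * (qsub r p : nat)%:R + acc) 0 quads == (q == p)%:R) quads) quads.
Proof. by vm_compute. Qed.

Lemma KEY C B : \sum_A mq (bits A) (bits C) * gvec A B = (C == B)%:R.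
Proof.
move: C B; apply: allQ => q; apply: allQ => p.
rewrite sumQ (eq_bigr (fun r => mq r q * (qsub r p : nat)%:R)); last first.
  by move=> r _; rewrite !bitsK gvec_mk.
rewrite big_foldr mk_eq.
have /allP/(_ q (mem_quads q))/allP/(_ p (mem_quads p))/eqP := KEYb.
exact.
Qed.

Lemma E1 (w : tup) : expand (mob w) = w.
Proof.
apply/ffunP => B; rewrite ffunE.
under eq_bigr do rewrite ffunE mulr_suml.
rewrite exchange_big /=.
rewrite (eq_bigr (fun C => w C * (C == B)%:R)); last first.
  by move=> C _; rewrite -KEY mulr_sumr; apply: eq_bigr => A _; rewrite mulrA.
rewrite (bigD1 B) //= eqxx mulr1 big1 ?addr0 // => C /negbTE ->.
by rewrite mulr0.
Qed.

Lemma E2 (w : tup) : (forall B, 2 * w B = 0) ->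
  (forall c1 c3 : bool, w (mk (c1,true,c3,true)) =
     w (mk (c1,true,c3,false)) + w (mk (c1,false,c3,true)) - w (mk (c1,false,c3,false))) ->
  Zcoeffs (mob w) /\ cong4 (mob w [set e1; e3]) 0.
Proof.
move=> W1 W2.
have M2 A : 2 * mob w A = 0.
  by rewrite ffunE mulr_sumr big1 // => C _; rewrite mulrA W1 mul0r.
split; last exact: two0_cong.
split; first exact: two0_cong2.
split; first exact: two0_cong2.
split; first by move=> A _; apply: two0_dvd.
split; first by move=> A _ _; apply: two0_cong.
apply: allQ => q; rewrite set24E subset_mk.
rewrite ffunE sumQ (eq_bigr (fun r => w (mk r) * mq q r)); last first.
  by move=> r _; rewrite !bitsK.
rewrite big_foldr.
case: q => [[[[] []] []] []] //= _; rewrite /mq /=; rewrite ?mulr0 ?mulr1 ?addr0 ?add0r !W2; ring.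
Qed.


Definition K {n : nat} (phi : ('I_n -> 'Z_8) -> 'Z_8) : Prop :=
 (forall y z, (forall i, 4 * (z i - y i) = 0) -> 4 * (phi z - phi y) = 0) /\
 (forall y z1 z2 z3 (e e' : 'I_n -> 'Z_8),
    (forall i, 2 * (z1 i - y i - 2 * e i) = 0 /\ 2 * (z2 i - y i - 2 * e' i) = 0 /\
               2 * (z3 i - y i - 2 * e i - 2 * e' i) = 0) ->
    2 * (phi z3 - phi z1 - phi z2 + phi y) = 0).

Lemma K_ext {n : nat} (phi psi : ('I_n -> 'Z_8) -> 'Z_8) : (forall y, phi y = psi y) -> K psi -> K phi.
Proof. by move=> E [h0 h2]; split=> *; rewrite !E; [apply: h0 | apply: h2]. Qed.

Lemma K_const {n : nat} (c : 'Z_8) : K (fun _ : 'I_n -> 'Z_8 => c).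
Proof. by split=> *; rewrite ?subrr; ring. Qed.

Lemma K_proj {n : nat} (i : 'I_n) : K (fun y => y i).
Proof.
split=> [y z h|y z1 z2 z3 e e' h]; first exact: h.
have [h1 [h2 h3]] := h i.
have -> : 2 * (z3 i - z1 i - z2 i + y i) =
  2 * (z3 i - y i - 2 * e i - 2 * e' i) - 2 * (z1 i - y i - 2 * e i) - 2 * (z2 i - y i - 2 * e' i) by ring.
by rewrite h1 h2 h3 !subr0.
Qed.

Lemma K_add {n : nat} (phi psi : ('I_n -> 'Z_8) -> 'Z_8) : K phi -> K psi -> K (fun y => phi y + psi y).
Proof.
move=> [p0 p2] [q0 q2]; split=> [y z h|y z1 z2 z3 e e' h].
  have -> : 4 * (phi z + psi z - (phi y + psi y)) = 4 * (phi z - phi y) + 4 * (psi z - psi y) by ring.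
  by rewrite p0 // q0 // addr0.
have -> : 2 * (phi z3 + psi z3 - (phi z1 + psi z1) - (phi z2 + psi z2) + (phi y + psi y)) =
  2 * (phi z3 - phi z1 - phi z2 + phi y) + 2 * (psi z3 - psi z1 - psi z2 + psi y) by ring.
by rewrite (p2 _ _ _ _ _ _ h) (q2 _ _ _ _ _ _ h) addr0.
Qed.

Lemma ring_m1 (P0 P1 Q0 Q1 : 'Z_8) : 4 * (P1 - P0) = 0 -> 4 * (Q1 - Q0) = 0 ->
  4 * (P1 * Q1 - P0 * Q0) = 0.
Proof.
move=> h1 h2.
have -> : 4 * (P1 * Q1 - P0 * Q0) = (4 * (P1 - P0)) * Q1 + P0 * (4 * (Q1 - Q0)) by ring.
by rewrite h1 h2 mul0r mulr0 addr0.
Qed.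

Lemma ring_m2 (P0 P1 P2 P3 Q0 Q1 Q2 Q3 : 'Z_8) :
  4 * (P1 - P0) = 0 -> 4 * (P2 - P0) = 0 -> 2 * (P3 - P1 - P2 + P0) = 0 ->
  4 * (Q1 - Q0) = 0 -> 4 * (Q2 - Q0) = 0 -> 2 * (Q3 - Q1 - Q2 + Q0) = 0 ->
  2 * (P3 * Q3 - P1 * Q1 - P2 * Q2 + P0 * Q0) = 0.
Proof.
move=> a1 a2 a3 b1 b2 b3.
have -> : 2 * (P3 * Q3 - P1 * Q1 - P2 * Q2 + P0 * Q0) =
  P0 * (2 * (Q3 - Q1 - Q2 + Q0)) + Q0 * (2 * (P3 - P1 - P2 + P0)) +
  2 * ((P1 - P0) * (Q2 - Q0)) + 2 * ((P2 - P0) * (Q1 - Q0)) +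
  (P1 - P0) * (2 * (Q3 - Q1 - Q2 + Q0)) + (P2 - P0) * (2 * (Q3 - Q1 - Q2 + Q0)) +
  (2 * (P3 - P1 - P2 + P0)) * ((Q1 - Q0) + (Q2 - Q0) + (Q3 - Q1 - Q2 + Q0)) by ring.
by rewrite a3 b3 (four_mul a1 b2) (four_mul a2 b1) !mulr0 !mul0r !addr0.
Qed.

Lemma four_of (x e : 'Z_8) : 2 * (x - 2 * e) = 0 -> 4 * x = 0.
Proof.
move=> h; have -> : 4 * x = 2 * (2 * (x - 2 * e)) + 8 * e by ring.
by rewrite h mulr0 add0r F8 mul0r.
Qed.

Lemma K_mul {n : nat} (phi psi : ('I_n -> 'Z_8) -> 'Z_8) : K phi -> K psi -> K (fun y => phi y * psi y).
Proof.
move=> [p0 p2] [q0 q2]; split=> [y z h|y z1 z2 z3 e e' h].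
  by apply: ring_m1; [apply: p0 | apply: q0].
have h1 i : 4 * (z1 i - y i) = 0.
  by have [h1 _] := h i; apply: four_of h1.
have h2 i : 4 * (z2 i - y i) = 0.
  by have [_ [h2 _]] := h i; apply: four_of h2.
apply: ring_m2; [exact: p0 | exact: p0 | exact: (p2 _ _ _ _ _ _ h) |
                 exact: q0 | exact: q0 | exact: (q2 _ _ _ _ _ _ h)].
Qed.

Lemma K_sum {n : nat} (I : Type) (r : seq I) (F : I -> ('I_n -> 'Z_8) -> 'Z_8) :
  (forall i, K (F i)) -> K (fun y => \sum_(i <- r) F i y).
Proof.
move=> hF; elim: r => [|x r IH].
  by apply: (K_ext (psi := fun _ => 0)) => [y|]; rewrite ?big_nil //; apply: K_const.
apply: (K_ext (psi := fun y => F x y + \sum_(i <- r) F i y)) => [y|]; first by rewrite big_cons.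
exact: K_add.
Qed.

Lemma K_prod {n : nat} (I : Type) (r : seq I) (F : I -> ('I_n -> 'Z_8) -> 'Z_8) :
  (forall i, K (F i)) -> K (fun y => \prod_(i <- r) F i y).
Proof.
move=> hF; elim: r => [|x r IH].
  by apply: (K_ext (psi := fun _ => 1)) => [y|]; rewrite ?big_nil //; apply: K_const.
apply: (K_ext (psi := fun y => F x y * \prod_(i <- r) F i y)) => [y|]; first by rewrite big_cons.
exact: K_mul.
Qed.

Definition Qf {n : nat} (a b : 'I_n -> bool) (c : nat) (x : 'I_n -> 'Z_8) : 'Z_8 :=
  \sum_(i < n) (a i : nat)%:R * x i ^+ 2 + \sum_(i < n) (b i : nat)%:R * x i + c%:R.
Definition phi {n : nat} (a b : 'I_n -> bool) (c : nat) (x : 'I_n -> 'Z_8) : 'Z_8 := (\prod_(i < n) x i) * Qf a b c x.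

Lemma K_phi {n : nat} (a b : 'I_n -> bool) (c : nat) : K (phi a b c).
Proof.
apply: K_mul; first by apply: K_prod => i; apply: K_proj.
apply: K_add; last exact: K_const.
apply: K_add; apply: K_sum => i; apply: K_mul; try exact: K_const.
  apply: (K_ext (psi := fun y => y i * y i)) => [y|]; first by rewrite expr2.
  by apply: K_mul; apply: K_proj.
exact: K_proj.
Qed.

Lemma fopE {n : nat} (a b : 'I_n -> bool) (c : nat) (x : 'I_n -> 'Z_8) : fop a b c x = 2 * phi a b c x.
Proof. by rewrite /fop /phi /Qf mulrA. Qed.


Lemma even4 (m : nat) : ~~ odd m -> 4 * (m%:R : 'Z_8) = 0.
Proof.
move=> hm; rewrite -[m](odd_double_half) (negbTE hm) add0n -muln2 natrM.
have -> : 4 * ((m./2)%:R * 2%:R) = (8 : 'Z_8) * (m./2)%:R by ring.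
by rewrite F8 mul0r.
Qed.

Lemma odd2 (m : nat) : odd m -> ~ cong4 (2 * (m%:R : 'Z_8)) 0.
Proof.
move=> hm; rewrite /cong4 -natrM Zp_nat /=.
rewrite modn_dvdm //.
rewrite -[m](odd_double_half) hm -muln2.
have -> : (2 * (1 + m./2 * 2) = 2 + 4 * m./2)%N by ring.
by rewrite -modnDm modnMr.
Qed.

Lemma phi4 n (a b : 'I_n -> bool) (c : nat) (x : 'I_n -> 'Z_8) :
  ~~ odd (\sum_(i < n) (a i : nat) + \sum_(i < n) (b i : nat) + c)%N ->
  4 * phi a b c x = 0.
Proof.
move=> hpar.
set P := \prod_(i < n) x i.
have Pi i : P * (4 * x i) = 4 * P.
  rewrite /P (bigD1 i) //=.
  move: (\prod_(j < n | j != i) x j) => R.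
  have -> : x i * R * (4 * x i) = (4 * (x i * x i)) * R by ring.
  by rewrite four_sq; ring.
have Pi2 i : P * (4 * x i ^+ 2) = 4 * P by rewrite expr2 four_sq Pi.
rewrite /phi /Qf -/P.
set S1 := \sum_(i < n) _; set S2 := \sum_(i < n) _.
have -> : 4 * (P * (S1 + S2 + c%:R)) = P * (4 * S1) + P * (4 * S2) + 4 * P * c%:R by ring.
have -> : P * (4 * S1) = (\sum_(i < n) (a i : nat))%:R * (4 * P).
  rewrite /S1 !mulr_sumr natr_sum mulr_suml; apply: eq_bigr => i _.
  have -> : P * (4 * ((a i : nat)%:R * x i ^+ 2)) = (a i : nat)%:R * (P * (4 * x i ^+ 2)) by ring.
  by rewrite Pi2.
have -> : P * (4 * S2) = (\sum_(i < n) (b i : nat))%:R * (4 * P).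
  rewrite /S2 !mulr_sumr natr_sum mulr_suml; apply: eq_bigr => i _.
  have -> : P * (4 * ((b i : nat)%:R * x i)) = (b i : nat)%:R * (P * (4 * x i)) by ring.
  by rewrite Pi.
move: hpar; move: (\sum_(i < n) (a i : nat))%N (\sum_(i < n) (b i : nat))%N => s1 s2 hpar.
have -> : s1%:R * (4 * P) + s2%:R * (4 * P) + 4 * P * c%:R = P * (4 * (s1 + s2 + c)%N%:R).
  by rewrite !natrD; ring.
by rewrite even4 // mulr0.
Qed.

Lemma fop0 n (a b : 'I_n -> bool) (c : nat) (y : 'I_n -> 'Z_8) j :
  y j = 0 -> fop a b c y = 0.
Proof. by move=> h; rewrite /fop (bigD1 j) //= h mul0r mulr0 mul0r. Qed.

Lemma fop1 n (a b : 'I_n -> bool) (c : nat) (y : 'I_n -> 'Z_8) :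
  (forall i, y i = 1) ->
  fop a b c y = 2 * (\sum_(i < n) (a i : nat) + \sum_(i < n) (b i : nat) + c)%N%:R.
Proof.
move=> h; rewrite /fop big1 // mulr1 !natrD !natr_sum.
congr (2 * (_ + _ + _)); apply: eq_bigr => i _; by rewrite h ?expr1n mulr1.
Qed.


Definition ZQ (aq : quad -> 'Z_8) : bool :=
  [&& (val (aq (false,true,false,false)) %% 4 == val (2 * aq (true,false,false,false))%R %% 4)%N,
      (val (aq (false,false,false,true)) %% 4 == val (2 * aq (false,false,true,false))%R %% 4)%N,
      all (fun r => (2 <= cnt r)%N ==> (2 %| val (aq r))%N) quads,
      all (fun r => ((2 <= cnt r)%N && (r.1.1.2 || r.2)) ==> (val (aq r) %% 4 == 0)%N) quads,
      all (fun r => (r.1.1.2 && r.2) ==> (aq r == 0)) quads &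
      (val (aq (true,false,true,false)) %% 4 == 0)%N].

Definition ofQ (aq : quad -> 'Z_8) : {ffun {set 'I_4} -> 'Z_8} := [ffun A => aq (bits A)].

Lemma inM_Q aq : ZQ aq -> inM (expand (ofQ aq)).
Proof.
case/and5P => h1 h2 /allP h3 /allP h4 /andP[/allP h5 h6].
exists (ofQ aq); split => //.
split; last by rewrite set13E ffunE bitsK /cong4; apply/eqP.
split; first by rewrite set2E set1E !ffunE !bitsK /cong4; apply/eqP.
split; first by rewrite set4E set3E !ffunE !bitsK /cong4; apply/eqP.
split.
  apply: allQ => q; rewrite card_mk ffunE bitsK => hq.
  by have := h3 q (mem_quads q); rewrite hq.
split.
  apply: allQ => q; rewrite card_mk meet24 ffunE bitsK /cong4 => hq hm.
  by have := h4 q (mem_quads q); rewrite hq hm /= => /eqP.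
apply: allQ => q; rewrite set24E subset_mk ffunE bitsK => hq.
apply/eqP; have := h5 q (mem_quads q); move: hq.
by case: q => [[[[] []] []] []] //= _ h.
Qed.

Lemma expandQ aq x : expand (ofQ aq) (mk x) = foldr (fun r acc => aq r * (qsub r x : nat)%:R + acc) 0 quads.
Proof.
rewrite ffunE sumQ (eq_bigr (fun r => aq r * (qsub r x : nat)%:R)).
  by rewrite big_foldr.
by move=> r _; rewrite ffunE bitsK gvec_mk.
Qed.

Definition aq1 (r : quad) : 'Z_8 :=
  if r == (true,false,false,false) then 1 else if r == (false,true,false,false) then 2 else 0.
Definition aq2 (r : quad) : 'Z_8 :=
  if r == (false,false,true,false) then 1 else if r == (false,false,false,true) then 2 else 0.
Definition aq3 (r : quad) : 'Z_8 := if r == (false,false,false,false) then 1 else 0.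

Lemma ZQ1 : ZQ aq1. Proof. by vm_compute. Qed.
Lemma ZQ2 : ZQ aq2. Proof. by vm_compute. Qed.
Lemma ZQ3 : ZQ aq3. Proof. by vm_compute. Qed.

Definition U1 := expand (ofQ aq1).
Definition U2 := expand (ofQ aq2).
Definition U3 := expand (ofQ aq3).

Lemma U1_0 : U1 (mk (false,false,false,false)) = 0. Proof. by rewrite /U1 expandQ; apply/eqP; vm_compute. Qed.
Lemma U1_3 : U1 (mk (false,false,true,false)) = 0. Proof. by rewrite /U1 expandQ; apply/eqP; vm_compute. Qed.
Lemma U2_1 : U2 (mk (true,false,false,false)) = 0. Proof. by rewrite /U2 expandQ; apply/eqP; vm_compute. Qed.
Lemma U1_13 : U1 (mk (true,false,true,false)) = 1. Proof. by rewrite /U1 expandQ; apply/eqP; vm_compute. Qed.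
Lemma U2_13 : U2 (mk (true,false,true,false)) = 1. Proof. by rewrite /U2 expandQ; apply/eqP; vm_compute. Qed.
Lemma U3_13 : U3 (mk (true,false,true,false)) = 1. Proof. by rewrite /U3 expandQ; apply/eqP; vm_compute. Qed.

Lemma r3 (x1 x2 x3 x4 : 'Z_8) :
  x1 - x2 - x3 + x4 = 1 * x1 + (-1 * x2 + (-1 * x3 + (1 * x4 + 0))).
Proof. ring. Qed.

Lemma coef13 (a : {ffun {set 'I_4} -> 'Z_8}) :
  expand a (mk (true,false,true,false)) - expand a (mk (true,false,false,false))
  - expand a (mk (false,false,true,false)) + expand a (mk (false,false,false,false)) = a [set e1; e3].
Proof.
rewrite r3.
transitivity (\sum_(p <- [:: (1, mk (true,false,true,false)); (-1, mk (true,false,false,false));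
     (-1, mk (false,false,true,false)); (1, mk (false,false,false,false))]) p.1 * expand a p.2).
  by rewrite !big_cons !big_nil.
rewrite lin (eq_bigr (fun A => a A * (A == mk (true,false,true,false))%:R)); last first.
  move=> A _; congr (_ * _); move: A; apply: allQ => q.
  rewrite !big_cons !big_nil /= !gvec_mk mk_eq.
  by case: q => [[[[] []] []] []]; apply/eqP; vm_compute.
rewrite (bigD1 (mk (true,false,true,false))) //= eqxx mulr1 big1 ?addr0 ?set13E //.
by move=> A /negbTE ->; rewrite mulr0.
Qed.

Theorem lemma3p9 (n : nat) (hn : (2 <= n)%N) (a b : 'I_n -> bool) (c : nat)
  (hc : (c <= 3)%N) :
  ~~ odd (\sum_(i < n) (a i : nat) + \sum_(i < n) (b i : nat) + c)%N
  <-> preserves (fop a b c) inM.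
Proof.
split.
- move=> hpar u hu.
  set w := [ffun B => fop a b c (fun i => u i B)].
  exists (mob w); split; first by rewrite E1.
  apply: E2.
    move=> B; rewrite /w ffunE fopE.
    have -> : 2 * (2 * phi a b c (fun i => u i B)) = 4 * phi a b c (fun i => u i B) by ring.
    exact: phi4.
  move=> c1 c3; rewrite /w !ffunE !fopE.
  have := (K_phi a b c).2 (fun i => u i (mk (c1,false,c3,false)))
    (fun i => u i (mk (c1,true,c3,false))) (fun i => u i (mk (c1,false,c3,true)))
    (fun i => u i (mk (c1,true,c3,true)))
    (fun i => u i (mk q1) - u i (mk q0)) (fun i => u i (mk q3) - u i (mk q0))
    (fun i => E3 (hu i) c1 c3).
  move: (phi a b c _) (phi a b c _) (phi a b c _) (phi a b c _) => P3 P1 P2 P0 h.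
  apply/eqP; rewrite -subr_eq0; apply/eqP; rewrite -h; ring.
- move=> hpres; apply/negP => hodd.
  have h0 : (0 < n)%N by apply: leq_trans hn.
  pose i0 : 'I_n := Ordinal h0.
  pose i1 : 'I_n := Ordinal hn.
  have hne : (i1 == i0) = false by [].
  pose u := fun i : 'I_n => if i == i0 then U1 else if i == i1 then U2 else U3.
  have hu i : inM (u i).
    rewrite /u; case: ifP => _; first exact: inM_Q ZQ1.
    by case: ifP => _; [exact: inM_Q ZQ2 | exact: inM_Q ZQ3].
  have [a' [hw [_ h13]]] := hpres u hu.
  move: h13; rewrite -coef13 -hw !ffunE.
  have v0 : fop a b c (fun i => u i (mk (false,false,false,false))) = 0.
    by apply: (@fop0 _ _ _ _ _ i0); rewrite /u eqxx U1_0.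
  have v1 : fop a b c (fun i => u i (mk (true,false,false,false))) = 0.
    by apply: (@fop0 _ _ _ _ _ i1); rewrite /u hne eqxx U2_1.
  have v3 : fop a b c (fun i => u i (mk (false,false,true,false))) = 0.
    by apply: (@fop0 _ _ _ _ _ i0); rewrite /u eqxx U1_3.
  rewrite v0 v1 v3 fop1; last first.
    by move=> i; rewrite /u; case: ifP => _; [rewrite U1_13 | case: ifP => _; [rewrite U2_13 | rewrite U3_13]].
  rewrite !subr0 ?addr0.
  exact: odd2.
Qed.
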